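(* Let $\lambda>0$ and let $\{x_n\}$ be a sequence of positive real numbers satisfying $$\lim_{n\to\infty}x_n=0\quad\text{and}\quad\lim_{n\to\infty}\frac{\ln x_n}{\sum_{i=1}^nx_i^\lambda}=-b<0.$$ Then $$\lim_{n\to\infty}\frac{\ln x_n}{\ln n}=-\frac1\lambda.$$ *)

(* Defs.v *)
From Stdlib Require Import Reals.
From Coquelicot Require Import Coquelicot.
Open Scope R_scope.

(* S x lam n = sum_{i=1}^n x_i^lam  (sequences are indexed from 1; x 0 is unused) *)
Definition psum (x : nat -> R) (lam : R) (n : nat) : R :=
  sum_n_m (fun i => Rpower (x i) lam) 1 n.

(* Main.v *)
Require Import Defs.
From Stdlib Require Import Reals Lra Lia Psatz.
From Coquelicot Require Import Coquelicot.
Open Scope R_scope.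
From Stdlib Require Import Lra Lia Psatz.

Lemma step_up (a y S0 : R) : 0 < a -> 0 < y -> y <= exp (- a * (S0 + y)) ->
  exp (a * (S0 + y)) <= exp (a * S0) + a.
Proof.
  intros Ha Hy H.
  assert (E1 : exp (a * S0) = exp (a * (S0 + y)) * exp (- a * y)).
  { rewrite <- exp_plus. f_equal. ring. }
  assert (E2 : exp (a * (S0 + y)) * exp (- a * (S0 + y)) = 1).
  { rewrite <- exp_plus. replace (a * (S0 + y) + - a * (S0 + y)) with 0 by ring. apply exp_0. }
  pose proof (exp_ineq1_le (- a * y)).
  pose proof (exp_pos (a * (S0 + y))).
  assert (y * exp (a * (S0 + y)) <= 1) by nra.
  nra.
Qed.

Lemma step_low (a y S0 : R) : 0 < a -> 0 < y -> y <= 1 -> exp (- a * (S0 + y)) <= y ->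
  exp (a * S0) + a * exp (- a) <= exp (a * (S0 + y)).
Proof.
  intros Ha Hy Hy1 H.
  assert (E1 : exp (a * (S0 + y)) = exp (a * S0) * exp (a * y)).
  { rewrite <- exp_plus. f_equal. ring. }
  assert (E3 : exp (a * S0) = exp (a * (S0 + y)) * exp (- a * y)).
  { rewrite <- exp_plus. f_equal. ring. }
  assert (E2 : exp (a * (S0 + y)) * exp (- a * (S0 + y)) = 1).
  { rewrite <- exp_plus. replace (a * (S0 + y) + - a * (S0 + y)) with 0 by ring. apply exp_0. }
  pose proof (exp_ineq1_le (a * y)).
  pose proof (exp_pos (a * (S0 + y))).
  pose proof (exp_pos (a * S0)).
  assert (exp (-a) <= exp (- a * y)).
  { destruct (Req_dec y 1). subst. right; f_equal; ring. left; apply exp_increasing; nra. }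
  assert (1 <= y * exp (a * (S0 + y))) by nra.
  assert (exp (a * (S0 + y)) - exp (a * S0) >= exp (a * S0) * (a * y)) by nra.
  assert (exp (a * S0) * (a * y) = a * exp (- a * y) * (y * exp (a * (S0 + y)))) by (rewrite E3; ring).
  assert (a * exp (- a * y) * (y * exp (a * (S0 + y))) >= a * exp (- a * y) * 1).
  { apply Rle_ge, Rmult_le_compat_l; [pose proof (exp_pos (- a * y)); nra | lra]. }
  nra.
Qed.

Lemma iter_up a (Sm y : nat -> R) N : 0 < a ->
  (forall n, Sm (S n) = Sm n + y (S n)) ->
  (forall n, (N <= n)%nat -> 0 < y n) ->
  (forall n, (N <= n)%nat -> y n <= exp (- a * Sm n)) ->
  forall k, exp (a * Sm (N + k)%nat) <= exp (a * Sm N) + a * INR k.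
Proof.
  intros Ha Hrec Hp Hb k. induction k.
  - rewrite Nat.add_0_r. simpl. lra.
  - rewrite Nat.add_succ_r, S_INR, Hrec.
    pose proof (step_up a (y (S (N + k))) (Sm (N + k)%nat) Ha (Hp (S (N + k)) ltac:(lia))).
    rewrite <- Hrec in H. specialize (H (Hb (S (N + k)) ltac:(lia))). rewrite Hrec in H. lra.
Qed.

Lemma iter_low a (Sm y : nat -> R) N : 0 < a ->
  (forall n, Sm (S n) = Sm n + y (S n)) ->
  (forall n, (N <= n)%nat -> 0 < y n) ->
  (forall n, (N <= n)%nat -> y n <= 1) ->
  (forall n, (N <= n)%nat -> exp (- a * Sm n) <= y n) ->
  forall k, exp (a * Sm N) + a * exp (- a) * INR k <= exp (a * Sm (N + k)%nat).
Proof.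
  intros Ha Hrec Hp H1 Hb k. induction k.
  - rewrite Nat.add_0_r. simpl. lra.
  - rewrite Nat.add_succ_r, S_INR, Hrec.
    pose proof (step_low a (y (S (N + k))) (Sm (N + k)%nat) Ha (Hp (S (N + k)) ltac:(lia)) (H1 (S (N + k)) ltac:(lia))).
    rewrite <- Hrec in H. specialize (H (Hb (S (N + k)) ltac:(lia))). rewrite Hrec in H. lra.
Qed.

Lemma ln_large (M : R) : exists N, forall n, (N <= n)%nat -> M <= ln (INR n).
Proof.
  destruct (INR_unbounded (exp M)) as [N HN]. exists N. intros n Hn.
  apply le_INR in Hn. rewrite <- (ln_exp M). apply ln_le. apply exp_pos. lra.
Qed.

Lemma inv_bounds c t e : 0 < c -> 0 < e -> 0 < t -> t <= c / 2 -> t <= e * c * c / 8 ->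
  / c - e / 4 <= / (c + t) /\ / (c - t) <= / c + e / 4.
Proof.
  intros Hc He Ht H1 H2.
  assert (E1 : / c - / (c + t) = t * / c * / (c + t)) by (field; lra).
  assert (E2 : / (c - t) - / c = t * / c * / (c - t)) by (field; lra).
  assert (0 < / c) by (apply Rinv_0_lt_compat; lra).
  assert (0 < / (c + t)) by (apply Rinv_0_lt_compat; lra).
  assert (0 < / (c - t)) by (apply Rinv_0_lt_compat; lra).
  assert (c * / c = 1) by (field; lra).
  assert ((c + t) * / (c + t) = 1) by (field; lra).
  assert ((c - t) * / (c - t) = 1) by (field; lra).
  assert (c * / (c + t) <= 1) by nra.
  assert (c * / (c - t) <= 2) by nra.
  split.
  - assert (t * / c * / (c + t) <= e / 4).
    { assert (t * / c * / (c + t) <= e * c * c / 8 * / c * / (c + t)).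
      { apply Rmult_le_compat_r; [lra|]. apply Rmult_le_compat_r; lra. }
      assert (e * c * c / 8 * / c * / (c + t) = e / 8 * (c * / c) * (c * / (c + t))) by (field; lra).
      nra. }
    lra.
  - assert (t * / c * / (c - t) <= e / 4).
    { assert (t * / c * / (c - t) <= e * c * c / 8 * / c * / (c - t)).
      { apply Rmult_le_compat_r; [lra|]. apply Rmult_le_compat_r; lra. }
      assert (e * c * c / 8 * / c * / (c - t) = e / 8 * (c * / (c - t))) by (field; lra).
      assert (e / 8 * (c * / (c - t)) <= e / 8 * 2) by (apply Rmult_le_compat_l; lra).
      lra. }
    lra.
Qed.

Lemma lowq a S L lnK e : 0 < a -> 0 < L -> a * S >= lnK + L -> lnK >= - (a * e / 2) * L ->
  S / L >= / a - e / 2.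
Proof.
  intros Ha HL H1 H2.
  assert (a * (S / L) >= 1 - a * e / 2).
  { assert (a * S >= L * (1 - a * e / 2)) by lra.
    assert (S = (S / L) * L) by (field; lra).
    rewrite H0 in H. nra. }
  assert (S / L = / a * (a * (S / L))) by (field; lra).
  rewrite H0. assert (0 < / a) by (apply Rinv_0_lt_compat; lra).
  assert (/ a * (1 - a * e / 2) = / a - e / 2) by (field; lra).
  nra.
Qed.

Lemma upq a S L lnK e : 0 < a -> 0 < L -> a * S <= lnK + L -> lnK <= (a * e / 2) * L ->
  S / L <= / a + e / 2.
Proof.
  intros Ha HL H1 H2.
  assert (a * (S / L) <= 1 + a * e / 2).
  { assert (a * S <= L * (1 + a * e / 2)) by lra.
    assert (S = (S / L) * L) by (field; lra).
    rewrite H0 in H. nra. }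
  assert (S / L = / a * (a * (S / L))) by (field; lra).
  rewrite H0. assert (0 < / a) by (apply Rinv_0_lt_compat; lra).
  assert (/ a * (1 + a * e / 2) = / a + e / 2) by (field; lra).
  nra.
Qed.

Lemma ratio_lim (Sm y : nat -> R) c : 0 < c ->
  (forall n, Sm (S n) = Sm n + y (S n)) ->
  (forall n, (1 <= n)%nat -> 0 < y n) ->
  (exists N, forall n, (N <= n)%nat -> y n <= 1) ->
  (forall t, 0 < t -> t < c -> exists N, forall n, (N <= n)%nat ->
      exp (-(c+t) * Sm n) <= y n /\ y n <= exp (-(c-t) * Sm n)) ->
  is_lim_seq (fun n => Sm n / ln (INR n)) (/ c).
Proof.
  intros Hc Hrec Hpos [N2 HN2] Hbd.
  apply is_lim_seq_spec. intros [e He]; simpl.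
  set (t := Rmin (c/2) (e*c*c/8)).
  assert (Ht1 : t <= c / 2) by apply Rmin_l.
  assert (Ht2 : t <= e * c * c / 8) by apply Rmin_r.
  assert (Ht0 : 0 < t).
  { unfold t, Rmin. destruct (Rle_dec (c/2) (e*c*c/8)); [lra|].
    assert (0 < e * c * c) by (apply Rmult_lt_0_compat; [nra|lra]). lra. }
  destruct (inv_bounds c t e Hc He Ht0 Ht1 Ht2) as [Ib1 Ib2].
  destruct (Hbd t Ht0 ltac:(lra)) as [N1 HN1].
  set (N0 := (N1 + N2 + 1)%nat).
  set (a := c + t). set (a' := c - t).
  assert (Ha : 0 < a) by (unfold a; lra).
  assert (Ha' : 0 < a') by (unfold a'; lra).
  assert (HposN : forall n, (N0 <= n)%nat -> 0 < y n) by (intros n Hn; apply Hpos; unfold N0 in Hn; lia).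
  pose proof (iter_low a Sm y N0 Ha Hrec HposN
     ltac:(intros n Hn; apply HN2; unfold N0 in Hn; lia)
     ltac:(intros n Hn; apply HN1; unfold N0 in Hn; lia)) as Hlow.
  pose proof (iter_up a' Sm y N0 Ha' Hrec HposN
     ltac:(intros n Hn; apply HN1; unfold N0 in Hn; lia)) as Hup.
  set (K1 := a * exp (- a) / 2).
  set (K2 := exp (a' * Sm N0) + a').
  assert (HK1 : 0 < K1) by (unfold K1; pose proof (exp_pos (-a)); nra).
  assert (HK2 : 0 < K2) by (unfold K2; pose proof (exp_pos (a' * Sm N0)); lra).
  set (A1 := 2 * Rabs (ln K1) / (a * e)).
  set (A2 := 2 * Rabs (ln K2) / (a' * e)).
  assert (A1e : A1 * (a * e) = 2 * Rabs (ln K1)) by (unfold A1; field; nra).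
  assert (A2e : A2 * (a' * e) = 2 * Rabs (ln K2)) by (unfold A2; field; nra).
  assert (A1p : 0 <= A1).
  { unfold A1. apply Rmult_le_pos. pose proof (Rabs_pos (ln K1)); lra.
    left; apply Rinv_0_lt_compat; nra. }
  assert (A2p : 0 <= A2).
  { unfold A2. apply Rmult_le_pos. pose proof (Rabs_pos (ln K2)); lra.
    left; apply Rinv_0_lt_compat; nra. }
  destruct (ln_large (1 + A1 + A2)) as [N3 HN3].
  exists (2 * N0 + N3)%nat. intros n Hn.
  assert (HL := HN3 n ltac:(lia)).
  set (L := ln (INR n)) in *.
  assert (HLp : 0 < L) by lra.
  assert (Hn1 : (1 <= n)%nat) by (unfold N0 in Hn; lia).
  assert (HnR : 1 <= INR n) by (apply (le_INR 1); exact Hn1).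
  assert (Hk : n = (N0 + (n - N0))%nat) by (unfold N0 in *; lia).
  assert (Hsub : INR (n - N0) = INR n - INR N0) by (apply minus_INR; unfold N0 in *; lia).
  assert (H2N : 2 * INR N0 <= INR n).
  { replace 2 with (INR 2) by (simpl; lra). rewrite <- mult_INR. apply le_INR. lia. }
  assert (Elow : K1 * INR n <= exp (a * Sm n)).
  { specialize (Hlow (n - N0)%nat). rewrite <- Hk in Hlow. rewrite Hsub in Hlow.
    pose proof (exp_pos (a * Sm N0)). pose proof (exp_pos (- a)).
    unfold K1. assert (0 < a * exp (-a)) by nra. nra. }
  assert (Lw : a * Sm n >= ln K1 + L).
  { unfold L. rewrite <- ln_mult by lra. rewrite <- (ln_exp (a * Sm n)).
    apply Rle_ge, ln_le; [nra | exact Elow]. }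
  assert (Eup : exp (a' * Sm n) <= K2 * INR n).
  { specialize (Hup (n - N0)%nat). rewrite <- Hk in Hup. rewrite Hsub in Hup.
    pose proof (exp_pos (a' * Sm N0)). pose proof (pos_INR N0).
    unfold K2. nra. }
  assert (Uw : a' * Sm n <= ln K2 + L).
  { unfold L. rewrite <- ln_mult by lra. rewrite <- (ln_exp (a' * Sm n)).
    apply ln_le; [apply exp_pos | exact Eup]. }
  assert (B1 : ln K1 >= - (a * e / 2) * L).
  { assert (A1 * (a * e) <= L * (a * e)) by (apply Rmult_le_compat_r; nra).
    pose proof (Rabs_pos (ln K1)). pose proof (Rle_abs (- ln K1)). rewrite Rabs_Ropp in H1.
    nra. }
  assert (B2 : ln K2 <= (a' * e / 2) * L).
  { assert (A2 * (a' * e) <= L * (a' * e)) by (apply Rmult_le_compat_r; nra).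
    pose proof (Rle_abs (ln K2)). nra. }
  pose proof (lowq a (Sm n) L (ln K1) e Ha HLp Lw B1).
  pose proof (upq a' (Sm n) L (ln K2) e Ha' HLp Uw B2).
  unfold a, a' in *.
  apply Rabs_def1; lra.
Qed.

Theorem lemma8 (lam b : R) (x : nat -> R) :
  0 < lam ->
  (forall n : nat, (1 <= n)%nat -> 0 < x n) ->
  is_lim_seq x 0 ->
  0 < b ->
  is_lim_seq (fun n => ln (x n) / psum x lam n) (- b) ->
  is_lim_seq (fun n => ln (x n) / ln (INR n)) (- / lam).
Proof.
  intros Hlam Hx Hx0 Hb Hlim.
  set (y := fun n => Rpower (x n) lam).
  set (Sm := psum x lam).
  assert (Hy : forall n, y n = exp (lam * ln (x n))) by (intro; reflexivity).
  assert (Hrec : forall n, Sm (S n) = Sm n + y (S n)).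
  { intro n. unfold Sm, psum. destruct n.
    - rewrite sum_n_n, sum_n_m_zero by lia. unfold y; simpl. change zero with 0. lra.
    - rewrite sum_n_Sm by lia. reflexivity. }
  assert (Hypos : forall n, 0 < y n) by (intro; rewrite Hy; apply exp_pos).
  assert (HS0 : forall n, 0 <= Sm n).
  { induction n. unfold Sm, psum. rewrite sum_n_m_zero by lia. right; reflexivity.
    rewrite Hrec. specialize (Hypos (S n)). lra. }
  assert (HSp : forall n, (1 <= n)%nat -> 0 < Sm n).
  { intros [|n] Hn. lia. rewrite Hrec. specialize (Hypos (S n)). specialize (HS0 n). lra. }
  set (c := lam * b).
  assert (Hc : 0 < c) by (unfold c; nra).
  assert (Hratio : is_lim_seq (fun n => Sm n / ln (INR n)) (/ c)).
  { apply (ratio_lim Sm y c Hc Hrec (fun n _ => Hypos n)).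
    - apply is_lim_seq_spec in Hx0. destruct (Hx0 (mkposreal 1 Rlt_0_1)) as [N HN].
      exists (S N). intros n Hn. specialize (HN n ltac:(lia)). simpl in HN.
      rewrite Rminus_0_r in HN. pose proof (Hx n ltac:(lia)).
      rewrite Rabs_pos_eq in HN by lra.
      rewrite Hy. rewrite <- exp_0. left. apply exp_increasing.
      assert (ln (x n) < 0). { rewrite <- ln_1. apply ln_increasing; lra. }
      nra.
    - intros t Ht Htc.
      apply is_lim_seq_spec in Hlim.
      assert (Htl : 0 < t / lam) by (apply Rdiv_lt_0_compat; lra).
      destruct (Hlim (mkposreal _ Htl)) as [N HN].
      exists (S N). intros n Hn. specialize (HN n ltac:(lia)). simpl in HN.
      apply Rabs_def2 in HN. destruct HN as [HN1 HN2].
      change (psum x lam n) with (Sm n) in HN1, HN2.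
      set (u := ln (x n) / Sm n) in *.
      assert (HSn : 0 < Sm n) by (apply HSp; lia).
      assert (Eu : ln (x n) = u * Sm n) by (unfold u; field; lra).
      assert (Elam : lam * (t / lam) = t) by (field; lra).
      assert (lam * (u + b) < lam * (t / lam)) by (apply Rmult_lt_compat_l; lra).
      assert (lam * (t / lam) > lam * (- (u + b))) by (apply Rmult_lt_compat_l; lra).
      assert (lam * u < - c + t) by (unfold c; lra).
      assert (lam * u > - c - t) by (unfold c; lra).
      rewrite Hy, Eu. split.
      + left; apply exp_increasing. nra.
      + left; apply exp_increasing. nra. }
  apply is_lim_seq_ext_loc with (fun n => (ln (x n) / Sm n) * (Sm n / ln (INR n))).
  - exists 1%nat. intros n Hn. assert (0 < Sm n) by (apply HSp; lia).
    unfold Rdiv. rewrite Rmult_assoc, <- (Rmult_assoc (/ Sm n)), Rinv_l by lra. ring.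
  - replace (- / lam) with (- b * / c) by (unfold c; field; lra).
    apply is_lim_seq_mult'; assumption.
Qed.
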